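(* For $U>0$, $\mu\in\mathbb{R}$, $T\ge0$ there exist constants $\eta>0$, $C>0$ depending only on $T,U,\mu$ such that for all $(\gamma,\alpha,\rho_0)\in\mathcal{D}$, $\mathcal{F}(\gamma,\alpha,\rho_0)\ge \eta(\rho_0^2+\rho_\gamma^2)-C$, where $\rho_\gamma=\int_{\mathbb{T}^3}\gamma\,dp$. In particular, for any minimizing sequence $(\gamma_n,\alpha_n,\rho_{0,n})$ of $\mathcal{F}$ over $\mathcal{D}$, the sequence $\rho_{0,n}$ is bounded and the sequences $\gamma_n$ and $\alpha_n$ are bounded in $L^1(\mathbb{T}^3)$.
   Context: Let $\mathbb{T}^3=[-\pi,\pi]^3$ with periodic identification and normalized Haar measure $dp$. Let $\varepsilon(p)=4\sum_{k=1}^3\sin^2(p_k/2)$. $\mathcal{D}=\{(\gamma,\alpha,\rho_0): \gamma\in L^1(\mathbb{T}^3),\ \gamma\ge0,\ \alpha^2\le\gamma(1+\gamma)\text{ a.e.},\ \rho_0\ge0\}$. With $\beta=\sqrt{(\tfrac12+\gamma)^2-\alpha^2}$, $S(\gamma,\alpha)=\int\big[(\beta+\tfrac12)\ln(\beta+\tfrac12)-(\beta-\tfrac12)\ln(\beta-\tfrac12)\big]dp$, and $\mathcal{F}(\gamma,\alpha,\rho_0)=\int(\varepsilon-\mu)\gamma\,dp-\mu\rho_0-TS(\gamma,\alpha)+\frac U2(\int\alpha)^2+U(\int\gamma)^2+U\rho_0\int\alpha+2U\rho_0\int\gamma+\frac U2\rho_0^2$ (integrals over $\mathbb{T}^3$).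 *)

(* Defs.v *)
From HB Require Import structures.
From mathcomp Require Import all_boot all_order all_algebra.
From mathcomp Require Import all_classical all_reals all_analysis.
Set Implicit Arguments. Unset Strict Implicit. Unset Printing Implicit Defensive.
Import Order.TTheory GRing.Theory Num.Theory.
Import numFieldNormedType.Exports.
Local Open Scope classical_set_scope.
Local Open Scope ring_scope.

(* Points of the torus are represented in R^3 = (R * R) * R; the torus T^3 is
   the fundamental box [-pi,pi]^3, the measure is 3-dimensional Lebesgue
   measure (iterated product), and the normalized Haar measure dp is
   Lebesgue measure on the box divided by (2 pi)^3. *)
Definition pt (R : realType) := ((R * R) * R)%type.

Definition leb3 (R : realType) :=
  (((@lebesgue_measure R) \x (@lebesgue_measure R)) \x (@lebesgue_measure R))%E.

Definition box (R : realType) : set (pt R) :=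
  (`[- pi, pi] `*` `[- pi, pi]) `*` `[- pi, pi].

Definition tint (R : realType) (f : pt R -> R) : R :=
  Rintegral (@leb3 R) (@box R) f / (2 * pi) ^+ 3.

Definition disp (R : realType) (p : pt R) : R :=
  4 * (sin (p.1.1 / 2) ^+ 2 + sin (p.1.2 / 2) ^+ 2 + sin (p.2 / 2) ^+ 2).

(* x ln x, with the convention 0 ln 0 = 0 (ln 0 = 0 in mathcomp-analysis) *)
Definition xlnx (R : realType) (x : R) : R := x * ln x.

Definition betaf (R : realType) (g a : pt R -> R) (p : pt R) : R :=
  Num.sqrt ((2^-1 + g p) ^+ 2 - a p ^+ 2).

Definition entropy_density (R : realType) (g a : pt R -> R) (p : pt R) : R :=
  xlnx (betaf g a p + 2^-1) - xlnx (betaf g a p - 2^-1).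

Definition entropy (R : realType) (g a : pt R -> R) : R :=
  tint (entropy_density g a).

Definition Ffun (R : realType) (U mu T : R) (g a : pt R -> R) (rho0 : R) : R :=
  tint (fun p => (disp p - mu) * g p) - mu * rho0 - T * entropy g a
  + U / 2 * (tint a) ^+ 2 + U * (tint g) ^+ 2 + U * rho0 * tint a
  + 2 * U * rho0 * tint g + U / 2 * rho0 ^+ 2.

Definition inD (R : realType) (g a : pt R -> R) (rho0 : R) : Prop :=
  [/\ (@leb3 R).-integrable (@box R) (EFin \o g),
      measurable_fun (@box R) a,
      {ae @leb3 R, forall p : pt R, @box R p -> 0 <= g p /\ a p ^+ 2 <= g p * (1 + g p)}
    & 0 <= rho0].

Definition Finf (R : realType) (U mu T : R) : \bar R :=
  ereal_inf [set (Ffun U mu T x.1.1 x.1.2 x.2)%:E | x in [set x | inD x.1.1 x.1.2 x.2]].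

Definition minimizing_seq (R : realType) (U mu T : R)
    (gs as_ : nat -> pt R -> R) (rs : nat -> R) : Prop :=
  (forall n, inD (gs n) (as_ n) (rs n)) /\
  ((fun n => (Ffun U mu T (gs n) (as_ n) (rs n))%:E) @ \oo --> Finf U mu T).

(* Main.v *)
Require Import Defs.
From HB Require Import structures.
From mathcomp Require Import all_boot all_order all_algebra.
From mathcomp Require Import all_classical all_reals all_analysis.
From mathcomp Require Import ring lra measurable_realfun.
Import Order.TTheory GRing.Theory Num.Theory.
Import numFieldNormedType.Exports.
Local Open Scope classical_set_scope.
Local Open Scope ring_scope.

Lemma mbox (R : realType) : measurable (@box R).
Proof. by apply: measurableX; [apply: measurableX|]; exact: measurable_itv. Qed.

Lemma leb3_box (R : realType) : (@leb3 R) (@box R) = ((pi + pi) * (pi + pi) * (pi + pi) : R)%:E.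
Proof.
rewrite /leb3 /box /= product_measure1E; last 2 first.
- by apply: measurableX; exact: measurable_itv.
- exact: measurable_itv.
rewrite /= product_measure1E; try exact: measurable_itv.
have pi0 : (0 : R) < pi := pi_gt0 R.
have h : - pi < pi :> R by lra.
have m1 : @lebesgue_measure R (`[(- pi)%R, pi]%classic) = ((pi+pi)%:E)%E.
  by rewrite lebesgue_measure_itv /= lte_fin h opprK -EFinD.
transitivity (((pi+pi : R))%:E * (pi+pi : R)%:E * (pi+pi : R)%:E)%E; last by rewrite -!EFinM.
by congr (_ * _ * _)%E; exact: m1.
Qed.

Lemma measurable_xlnx (R : realType) : measurable_fun setT (@xlnx R).
Proof. by apply: measurable_realfun.measurable_funM => //; exact: measurable_ln. Qed.

Lemma measurable_disp (R : realType) (D : set (pt R)) : measurable D -> measurable_fun D (@disp R).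
Proof.
move=> mD.
have ms : measurable_fun setT (fun x : R => sin (x / 2) ^+ 2).
  apply: measurable_realfun.measurable_funX; apply: measurableT_comp; first exact: measurable_realfun.continuous_measurable_fun (@continuous_sin R).
  by apply: measurable_realfun.measurable_funM.
rewrite /disp; apply: measurable_realfun.measurable_funM => //.
apply: measurable_realfun.measurable_funD; first apply: measurable_realfun.measurable_funD.
- apply: (measurableT_comp ms); apply: measurableT_comp; first exact: measurable_fst.
  exact: measurableT_comp measurable_fst _.
- apply: (measurableT_comp ms); apply: measurableT_comp; first exact: measurable_snd.
  exact: measurableT_comp measurable_fst _.
- apply: (measurableT_comp ms); exact: measurableT_comp measurable_snd _.
Qed.

Lemma measurable_ent (R : realType) (g a : pt R -> R) (D : set (pt R)) : measurable D ->
  measurable_fun D g -> measurable_fun D a -> measurable_fun D (entropy_density g a).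
Proof.
move=> mD mg ma.
have mb : measurable_fun D (betaf g a).
  apply: measurableT_comp; first exact: measurable_realfun.continuous_measurable_fun (@sqrt_continuous R).
  apply: measurable_realfun.measurable_funB; apply: measurable_realfun.measurable_funX => //.
  by apply: measurable_realfun.measurable_funD.
apply: measurable_realfun.measurable_funB.
- apply: measurableT_comp; first exact: measurable_xlnx.
  by apply: measurable_realfun.measurable_funD.
- apply: measurableT_comp; first exact: measurable_xlnx.
  by apply: measurable_realfun.measurable_funB.
Qed.
Lemma ent_c (R : realType) (c : R) : 0 <= c ->
  0 <= xlnx (c + 1) - xlnx c <= 1 + c.
Proof.
rewrite le_eqVlt => /predU1P[<-|c0].
  by rewrite /xlnx add0r ln1 !mul0r mulr0 subr0 lexx /=; lra.
have ci : 0 < c^-1 by rewrite invr_gt0.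
have h1 : ln (c + 1) = ln c + ln (1 + c^-1).
  rewrite -lnM ?posrE; [|lra|lra].
  by rewrite mulrDr mulr1 mulfV // (lt0r_neq0 c0).
have e : xlnx (c + 1) - xlnx c = ln (c + 1) + c * ln (1 + c^-1).
  by rewrite /xlnx !h1; ring.
have l1 : 0 <= ln (c + 1) by apply: ln_ge0; lra.
have l2 : 0 <= ln (1 + c^-1) by apply: ln_ge0; lra.
have l3 : ln (c + 1) <= c by rewrite addrC; apply: le_ln1Dx; lra.
have l4 : c * ln (1 + c^-1) <= 1.
  apply: (@le_trans _ _ (c * c^-1)); last by rewrite mulfV // (lt0r_neq0 c0).
  apply: ler_wpM2l; first lra.
  by apply: le_ln1Dx; lra.
have l5 : 0 <= c * ln (1 + c^-1) by apply: mulr_ge0 => //; lra.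
rewrite e; apply/andP; split; lra.
Qed.

Lemma pw (R : realType) (g a : R) : 0 <= g -> a ^+ 2 <= g * (1 + g) ->
  let b := Num.sqrt ((2^-1 + g) ^+ 2 - a ^+ 2) in
  `|a| <= g + 2^-1 /\ 0 <= xlnx (b + 2^-1) - xlnx (b - 2^-1) <= 1 + g.
Proof.
move=> g0 ha b.
have hq : 4^-1 <= (2^-1 + g) ^+ 2 - a ^+ 2.
  have -> : (4^-1 : R) = 2^-1 * 2^-1 by rewrite -invfM; congr (_^-1); lra.
  nra.
have b0 : 0 <= b := sqrtr_ge0 _.
have b2 : b ^+ 2 = (2^-1 + g) ^+ 2 - a ^+ 2 by rewrite sqr_sqrtr //; apply: le_trans hq; lra.
have i2 : (2^-1 : R) * 2 = 1 by rewrite mulVf.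
have hb1 : 2^-1 <= b by nra.
have hb2 : b <= g + 2^-1 by nra.
split.
  rewrite -ler_sqr ?nnegrE ?normr_ge0 //; last lra.
  by rewrite real_normK ?num_real //; nra.
have := @ent_c R (b - 2^-1) ltac:(lra).
rewrite (_ : b - 2^-1 + 1 = b + 2^-1); last lra.
by move=> /andP[h1 h2]; rewrite h1 /=; lra.
Qed.

Lemma int_cst_box (R : realType) (k : R) : (@leb3 R).-integrable (@box R) (EFin \o cst k).
Proof.
apply/integrableP; split; first exact/measurable_EFinP/measurable_cst.
rewrite (_ : (\int[@leb3 R]_(x in @box R) `|(EFin \o cst k) x| =
   \int[@leb3 R]_(x in @box R) (cst (`|k|%:E)) x)%E) //.
rewrite integral_cst; last exact: mbox.
rewrite [X in (_ * X)%E](_ : _ = ((pi + pi) * (pi + pi) * (pi + pi) : R)%:E); last exact: leb3_box.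
rewrite -EFinM; exact: ltry.
Qed.

Lemma Rint_cst_box (R : realType) (k : R) :
  Rintegral (@leb3 R) (@box R) (cst k) = k * ((pi + pi) * (pi + pi) * (pi + pi)).
Proof.
rewrite Rintegral_cst; last exact: mbox.
rewrite [X in _ * fine X](_ : _ = ((pi + pi) * (pi + pi) * (pi + pi) : R)%:E) //.
exact: leb3_box.
Qed.

Lemma transfer (R : realType) (N : set (pt R)) (f : pt R -> R) :
  measurable N -> (@leb3 R) N = 0%E -> measurable_fun (@box R) f ->
  (@leb3 R).-integrable (@box R `\` N) (EFin \o f) ->
  (@leb3 R).-integrable (@box R) (EFin \o f) /\
  Rintegral (@leb3 R) (@box R) f = Rintegral (@leb3 R) (@box R `\` N) f.
Proof.
move=> mN N0 mf /integrableP[_ fi].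
have ifb : (@leb3 R).-integrable (@box R) (EFin \o f).
  apply/integrableP; split; first exact/measurable_EFinP.
  rewrite (ge0_negligible_integral _ _ _ _ N0) //; first exact: mbox.
  by apply: measurableT_comp => //; exact/measurable_EFinP.
split => //.
by rewrite /Rintegral (negligible_integral _ _ _ N0) //; exact: mbox.
Qed.

Definition T3 (R : realType) := ((measurableTypeR R * measurableTypeR R) * measurableTypeR R)%type.

Lemma mbox3 (R : realType) : measurable (@box R : set (T3 R)).
Proof. exact: mbox. Qed.

Lemma disp_bound (R : realType) (p : pt R) : 0 <= disp p <= 12.
Proof.
have h (x : R) : 0 <= sin x ^+ 2 <= 1.
  by rewrite sqr_ge0 /= sin2cos2 lerBlDr lerDl sqr_ge0.
rewrite /disp; move: (h (p.1.1/2)) (h (p.1.2/2)) (h (p.2/2)) => /andP[? ?] /andP[? ?] /andP[? ?].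
apply/andP; split; lra.
Qed.

Lemma final_arith (R : realType) (mu W jg jag ja jaa jc jd jmg js j1g : R) :
  0 < W -> 0 <= jg -> jag = jg -> jaa <= jc -> jc = jg + 2^-1 * W -> `|ja| <= jaa ->
  jmg <= jd -> jmg = - mu * jg -> js <= j1g -> j1g = 1 * W + jg ->
  0 <= jg / W /\ jag / W = jg / W /\ jaa / W <= jg / W + 2^-1 /\
  `|ja / W| <= jg / W + 2^-1 /\ - mu * (jg / W) <= jd / W /\ js / W <= 1 + jg / W.
Proof.
move=> W0 jg0 e1 h1 e2 h2 h3 e3 h4 e4.
have Wn : W != 0 by rewrite gt_eqF.
split; first exact: divr_ge0 jg0 (ltW W0).
split; first by rewrite e1.
split; first by rewrite ler_pdivrMr // mulrDl divfK //; lra.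
split; first by rewrite normrM normfV (gtr0_norm W0) ler_pdivrMr // mulrDl divfK //; lra.
split; first by rewrite mulrA ler_pM2r ?invr_gt0 //; lra.
by rewrite ler_pdivrMr // mulrDl divfK // mul1r; lra.
Qed.

Lemma facts (R : realType) (mu : R) (g a : pt R -> R) (rho0 : R) : inD g a rho0 ->
  0 <= tint g /\ tint (fun p => `|g p|) = tint g /\
  tint (fun p => `|a p|) <= tint g + 2^-1 /\ `|tint a| <= tint g + 2^-1 /\
  - mu * tint g <= tint (fun p => (disp p - mu) * g p) /\
  entropy g a <= 1 + tint g.
Proof.
case=> ig ma [N [mN N0 sN]] _.
set D := @box R `\` N.
have mD : measurable (D : set (T3 R)) := measurableD (mbox3 R) mN.
have DB : D `<=` @box R by move=> p [].
have good : forall p, D p -> 0 <= g p /\ a p ^+ 2 <= g p * (1 + g p).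
  move=> p [bp Np].
  have : (fun p => @box R p -> 0 <= g p /\ a p ^+ 2 <= g p * (1 + g p)) p.
    by apply: contrapT => nP; apply: Np; apply: sN.
  by apply.
have mg0 := measurable_int _ ig.
have mg : measurable_fun (@box R) g.
  move/measurable_EFinP : mg0 => mg0.
  exact: mg0.
have gD : (@leb3 R).-integrable D (EFin \o g) := integrableS (mbox3 R) mD DB ig.
have c1D : (@leb3 R).-integrable D (EFin \o cst 1) := integrableS (mbox3 R) mD DB (int_cst_box R 1).
set W := (pi + pi) * (pi + pi) * (pi + pi) : R.
have W0 : 0 < W by rewrite /W; have := pi_gt0 R => ?; apply: mulr_gt0; [apply: mulr_gt0|]; lra.
have WE : (2 * pi) ^+ 3 = W by rewrite /W; ring.
set J := fun f => Rintegral (@leb3 R) D f.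
have dom : forall (f : pt R -> R) (K : R), measurable_fun (@box R) f ->
    (forall p, D p -> `|f p| <= K * (g p + 1)) ->
    (@leb3 R).-integrable D (EFin \o f) /\ tint f = J f / W.
  move=> f K mf hf.
  have iD : (@leb3 R).-integrable D (EFin \o f).
    apply: (le_integrable mD _ _ (integrableZl mD K (integrableD mD gD c1D))).
      apply/measurable_EFinP; apply: (measurable_funS (mbox3 R) DB); exact: mf.
    move=> p Dp /=; rewrite lee_fin.
    apply: (le_trans (hf p Dp)); rewrite ler_norm //.
  have [_ e] := transfer R N f mN N0 mf iD.
  by split => //; rewrite /tint e WE.
have mbB := measurable_realfun.measurable_funB.
have mbD := measurable_realfun.measurable_funD.
have mbM := measurable_realfun.measurable_funM.
have pwD : forall p, D p -> `|a p| <= g p + 2^-1 /\ 0 <= entropy_density g a p <= 1 + g p.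
  move=> p Dp; have [h1 h2] := good p Dp; exact: (@pw R _ _ h1 h2).
have [_ tg] := dom g 1 mg (fun p Dp => ltac:(have [h1 _] := good p Dp; rewrite ger0_norm //; lra)).
have [_ tag] := dom (fun p => `|g p|) 1 ltac:(apply: measurableT_comp => //)
  (fun p Dp => ltac:(have [h1 _] := good p Dp; rewrite normr_id ger0_norm //; lra)).
have [ia ta] := dom a 1 ma (fun p Dp => ltac:(have [h1 _] := good p Dp; have [h3 _] := pwD p Dp; lra)).
have [iaa taa] := dom (fun p => `|a p|) 1 ltac:(apply: measurableT_comp => //)
  (fun p Dp => ltac:(have [h1 _] := good p Dp; have [h3 _] := pwD p Dp; rewrite normr_id; lra)).
have [igc _] := dom (fun p => g p + 2^-1) 1 ltac:(by apply: mbD => //)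
  (fun p Dp => ltac:(have [h1 _] := good p Dp; rewrite ger0_norm; lra)).
have [ig1 _] := dom (fun p => 1 + g p) 1 ltac:(by apply: mbD => //)
  (fun p Dp => ltac:(have [h1 _] := good p Dp; rewrite ger0_norm; lra)).
have hd : forall p, D p -> `|(disp p - mu) * g p| <= (12 + `|mu|) * (g p + 1).
  move=> p Dp; have [h1 _] := good p Dp; have /andP[d1 d2] := disp_bound R p.
  rewrite normrM (ger0_norm h1).
  have hn : `|disp p - mu| <= 12 + `|mu|.
    by apply: (le_trans (ler_normB _ _)); rewrite (ger0_norm d1); lra.
  apply: ler_pM; [exact: normr_ge0|exact: h1|exact: hn|lra].
have [idg tdg] := dom (fun p => (disp p - mu) * g p) (12 + `|mu|)
  ltac:(by apply: mbM => //; apply: mbB => //; apply: measurable_disp; exact: mbox) hd.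
have [img _] := dom (fun p => - mu * g p) `|mu| ltac:(by apply: mbM => //)
  (fun p Dp => ltac:(have [h1 _] := good p Dp; rewrite normrM normrN (ger0_norm h1);
     apply: ler_wpM2l => //; lra)).
have [ise ts] := dom (entropy_density g a) 1 ltac:(by apply: measurable_ent => //; exact: mbox)
  (fun p Dp => ltac:(have [h1 _] := good p Dp; have [_ /andP[h3 h4]] := pwD p Dp;
     rewrite ger0_norm //; lra)).
have Jc : forall k, J (cst k) = k * W.
  move=> k; have [_ e] := transfer R N (cst k) mN N0 (measurable_cst _)
    (integrableS (mbox3 R) mD DB (int_cst_box R k)).
  by rewrite /J -e Rint_cst_box.
have icD : forall k, (@leb3 R).-integrable D (EFin \o cst k) :=
  fun k => integrableS (mbox3 R) mD DB (int_cst_box R k).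
have Jg0 : 0 <= J g by apply: Rintegral_ge0 => p Dp; have [] := good p Dp.
have Jabsg : J (fun p => `|g p|) = J g.
  by apply: eq_Rintegral => p /set_mem Dp; have [h1 _] := good p Dp; rewrite ger0_norm.
have Ja1 : J (fun p => `|a p|) <= J (fun p => g p + 2^-1).
  by apply: le_Rintegral => // p Dp; have [] := pwD p Dp.
have Ja2 : J (fun p => g p + 2^-1) = J g + J (cst 2^-1) := RintegralD mD gD (icD _).
have Jna : `|J a| <= J (fun p => `|a p|) := le_normr_Rintegral mD ia.
have Jd : J (fun p => - mu * g p) <= J (fun p => (disp p - mu) * g p).
  apply: le_Rintegral => // p Dp; have [h1 _] := good p Dp.
  have /andP[d1 _] := disp_bound R p.
  rewrite mulrBl -mulNr lerDr; exact: mulr_ge0.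
have Jd2 : J (fun p => - mu * g p) = - mu * J g by apply: RintegralZl.
have Js : J (entropy_density g a) <= J (fun p => 1 + g p).
  by apply: le_Rintegral => // p Dp; have [_ /andP[]] := pwD p Dp.
have Js2 : J (fun p => 1 + g p) = J (cst 1) + J g := RintegralD mD (icD _) gD.
rewrite /entropy tg tag ta taa tdg ts !Jc in Ja2 Js2 *.
exact: (@final_arith R mu _ _ _ _ _ _ _ _ _ _ W0 Jg0 Jabsg Ja1 Ja2 Jna Jd Jd2 Js Js2).
Qed.

Lemma sq_lin (R : realType) (U m x : R) : 0 < U -> 0 <= U / 16 * x ^+ 2 - m * x + 4 * m ^+ 2 / U.
Proof.
move=> U0; have Un : U != 0 by rewrite gt_eqF.
have e : U / 16 * x ^+ 2 - m * x + 4 * m ^+ 2 / U = (U * x - 8 * m) ^+ 2 / (16 * U).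
  by field; rewrite Un /=; lra.
by rewrite e; apply: divr_ge0; [exact: sqr_ge0|lra].
Qed.

Lemma main_arith (R : realType) (U mu T x y A Dd S : R) : 0 < U -> 0 <= T -> 0 <= x -> 0 <= y ->
  `|A| <= y + 2^-1 -> - mu * y <= Dd -> S <= 1 + y ->
  U / 16 * (x ^+ 2 + y ^+ 2) - (U / 8 + T + 4 * mu ^+ 2 / U + 4 * (mu + T) ^+ 2 / U + 1) <=
  Dd - mu * x - T * S + U / 2 * A ^+ 2 + U * y ^+ 2 + U * x * A + 2 * U * x * y + U / 2 * x ^+ 2.
Proof.
move=> U0 T0 x0 y0 hA hD hS.
have h1 : T * S <= T + T * y by rewrite -[T in T + _]mulr1 -mulrDr; apply: ler_wpM2l.
have hA2 : A ^+ 2 <= (y + 2^-1) ^+ 2.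
  by rewrite -real_normK ?num_real //; apply: lerXn2r => //; rewrite nnegrE; lra.
have i2 : (2^-1 : R) * 2 = 1 by rewrite mulVf.
have g1 : x ^+ 2 <= 2 * (A + x) ^+ 2 + 2 * A ^+ 2.
  have e : 2 * (A + x) ^+ 2 + 2 * A ^+ 2 - x ^+ 2 = (2 * A + x) ^+ 2 by ring.
  by rewrite -subr_ge0 e sqr_ge0.
have g2 : (y + 2^-1) ^+ 2 <= 2 * y ^+ 2 + 2^-1.
  have e : 2 * y ^+ 2 + 2^-1 - (y + 2^-1) ^+ 2 = (y - 2^-1) ^+ 2 by field.
  by rewrite -subr_ge0 e sqr_ge0.
have f1 : x ^+ 2 <= 2 * (A + x) ^+ 2 + 4 * y ^+ 2 + 1 by lra.
have f2 : U * x ^+ 2 <= U * (2 * (A + x) ^+ 2 + 4 * y ^+ 2 + 1) by apply: ler_wpM2l => //; lra.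
have f3 : 0 <= U * (A + x) ^+ 2 by apply: mulr_ge0; [lra|exact: sqr_ge0].
have f4 : 0 <= U * y * x by apply: mulr_ge0 => //; apply: mulr_ge0 => //; lra.
have q1 := @sq_lin R U mu x U0.
have q2 := @sq_lin R U (mu + T) y U0.
have eU : U / 2 * A ^+ 2 + U * x * A + U / 2 * x ^+ 2 = U / 2 * (A + x) ^+ 2 by field.
have eUy : U / 16 * y ^+ 2 = U * y^+2 / 16 by field.
nra.
Qed.

Lemma inD0 (R : realType) : inD (fun _ : pt R => 0) (fun _ => 0) 0.
Proof.
split.
- exact: int_cst_box R 0.
- by apply: measurable_cst.
- by apply: aeW => p _; rewrite expr0n /= mul0r; split.
- by [].
Qed.

Lemma sq_bound (R : realType) (eta Q z : R) : 0 < eta -> 0 <= z -> eta * z ^+ 2 <= Q -> z <= 1 + Q / eta.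
Proof.
move=> e0 z0 h.
have hq : 0 <= Q / eta by apply: divr_ge0; [apply: le_trans h; apply: mulr_ge0; [lra|exact: sqr_ge0]|lra].
have [z1|z1] := lerP z 1; first lra.
have : z ^+ 2 <= Q / eta by rewrite ler_pdivlMr // mulrC.
nra.
Qed.

Theorem corollary3p2 (R : realType) (U mu T : R) :
  0 < U -> 0 <= T ->
  (exists eta C : R, 0 < eta /\ 0 < C /\
     forall (g a : pt R -> R) (rho0 : R), inD g a rho0 ->
       eta * (rho0 ^+ 2 + (tint g) ^+ 2) - C <= Ffun U mu T g a rho0)
  /\
  (forall (gs as_ : nat -> pt R -> R) (rs : nat -> R),
     minimizing_seq U mu T gs as_ rs ->
     exists M : R, forall n,
       rs n <= M /\ tint (fun p => `|gs n p|) <= M /\ tint (fun p => `|as_ n p|) <= M).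
Proof.
move=> U0 T0.
set eta := U / 16.
set C := U / 8 + T + 4 * mu ^+ 2 / U + 4 * (mu + T) ^+ 2 / U + 1.
have eta0 : 0 < eta by rewrite /eta divr_gt0.
have C0 : 0 < C.
  have h1 : 0 <= 4 * mu ^+ 2 / U by apply: divr_ge0; [apply: mulr_ge0; [lra|exact: sqr_ge0]|lra].
  have h2 : 0 <= 4 * (mu + T) ^+ 2 / U by apply: divr_ge0; [apply: mulr_ge0; [lra|exact: sqr_ge0]|lra].
  have h3 : 0 < U / 8 by rewrite divr_gt0.
  rewrite /C; lra.
have P1 : forall (g a : pt R -> R) (rho0 : R), inD g a rho0 ->
    eta * (rho0 ^+ 2 + (tint g) ^+ 2) - C <= Ffun U mu T g a rho0.
  move=> g a rho0 H.
  have [h0 [_ [_ [hA [hD hS]]]]] := @facts R mu g a rho0 H.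
  have r0 : 0 <= rho0 by case: H.
  exact: (@main_arith R U mu T rho0 (tint g) (tint a) _ (entropy g a) U0 T0 r0 h0 hA hD hS).
split; first by exists eta, C.
move=> gs as_ rs [hin hcv].
have lbF : forall g a r, inD g a r -> - C <= Ffun U mu T g a r.
  move=> g a r H; have := P1 g a r H.
  have : 0 <= eta * (r ^+ 2 + tint g ^+ 2).
    by apply: mulr_ge0; [lra|apply: addr_ge0; exact: sqr_ge0].
  lra.
have Flb : ((- C)%:E <= Finf U mu T)%E.
  apply: le_ereal_inf_tmp => _ [[[g a] r] /= hx <-].
  by rewrite lee_fin; exact: lbF.
have Fub : (Finf U mu T <= (Ffun U mu T (fun _ => 0) (fun _ => 0) 0)%:E)%E.
  by apply: ereal_inf_lbound; exists ((fun _ => 0, fun _ => 0), 0) => //=; exact: inD0.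
have ffin : Finf U mu T \is a fin_num.
  apply: fin_real; apply/andP; split.
    exact: (lt_le_trans (ltNyr _) Flb).
  exact: (le_lt_trans Fub (ltry _)).
have hl : Finf U mu T = (fine (Finf U mu T))%:E by rewrite fineK.
rewrite hl in hcv.
move/fine_cvgP : hcv => [_ hc].
have hb := cvg_seq_bounded (cvgP _ hc).
have PF : ProperFilter (globally (@setT nat)) := @globally_properfilter nat setT 0%N I.
move/ex_bound: hb => [K hK].
set B := (K + C) / eta.
exists (B + 2) => n.
have Fn : Ffun U mu T (gs n) (as_ n) (rs n) <= K.
  apply: le_trans (ler_norm _) _; exact: (hK n I).
have H := hin n.
have hP := P1 _ _ _ H.
have [h0 [hg [ha _]]] := @facts R mu _ _ _ H.
have r0 : 0 <= rs n by case: H.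
have s1 : eta * rs n ^+ 2 <= K + C.
  have : 0 <= eta * tint (gs n) ^+ 2 by apply: mulr_ge0; [lra|exact: sqr_ge0].
  rewrite mulrDr in hP; lra.
have s2 : eta * tint (gs n) ^+ 2 <= K + C.
  have : 0 <= eta * rs n ^+ 2 by apply: mulr_ge0; [lra|exact: sqr_ge0].
  rewrite mulrDr in hP; lra.
have b1 := @sq_bound R eta (K + C) (rs n) eta0 r0 s1.
have b2 := @sq_bound R eta (K + C) (tint (gs n)) eta0 h0 s2.
rewrite hg; rewrite -/B in b1 b2.
split; first lra.
split; first lra.
lra.
Qed.
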